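(* If $L$ is an oriented classical link, then its forbidden matrix $\mathcal{FM}(L)$ is symmetric.
   Context: An oriented (classical or virtual) link with $n$ components is represented by a signed Gauss diagram: $n$ oriented circles, one per component, with arrows from over-crossing point to under-crossing point, each arrow carrying the sign $\pm1$ of its crossing. A classical link is one representable by a planar link diagram. The forbidden moves are: interchange two adjacent arrowheads, or two adjacent arrow tails, on a circle. Using forbidden and Reidemeister moves, a Gauss diagram can be reduced to one with no arrow having both endpoints on the same circle and in which, for each ordered pair $(j,k)$ of distinct circles, all arrows from circle $j$ to circle $k$ have the same sign. The forbidden quiver $\mathcal{FQ}(L)$ is obtained by shrinking each circle of this reduced diagram to a vertex; $m$ parallel arrows of sign $\varepsilon$ from vertex $j$ to vertex $k$ are recorded as a single arrow with integer label $\varepsilon m$. The forbidden matrix $\mathcal{FM}(L)$ is the $n\times n$ integer matrix whose $(j,k)$ entry is the label on the arrow from vertex $j$ to vertex $k$ of $\mathcal{FQ}(L)$ ($0$ if there is none). *)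

(* Defs.v *)
From mathcomp Require Import all_boot all_order all_algebra.
From Stdlib Require Import Relations.
Set Implicit Arguments. Unset Strict Implicit. Unset Printing Implicit Defensive.
Import GRing.Theory Num.Theory.

(* An endpoint is a pair (a, h) : nat * bool, where a is the label of the    *)
(* arrow (= crossing) and h = true means "arrowhead" (under-crossing point), *)
(* h = false means "arrow tail" (over-crossing point).  Circle j is the      *)
(* cyclic word [circ D j] of endpoints, read along the orientation of the    *)
(* j-th component (the word is considered up to rotation, see [rot_move]).   *)
(* [sgn D a] is the sign of arrow a : true = +1, false = -1.                 *)
Record gauss (n : nat) := Gauss {
  circ : 'I_n -> seq (nat * bool);
  sgn  : nat -> bool
}.

Section GaussDefs.
Variable n : nat.
Implicit Types D : gauss n.

Definition endpoints D : seq (nat * bool) :=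
  flatten [seq circ D j | j <- enum 'I_n].

Definition labels D : seq nat := undup [seq e.1 | e <- endpoints D].

Definition wf_gauss D : bool :=
  uniq (endpoints D) &&
  all (fun e => (e.1, ~~ e.2) \in endpoints D) (endpoints D).

(* the cyclic word of circle j is rotated (this does not change the diagram; *)
(* it makes cyclic adjacency available as linear adjacency)                  *)
Definition rot_move D D' : Prop :=
  sgn D' =1 sgn D /\
  exists j, circ D' j = rot 1 (circ D j) /\
            forall k, k != j -> circ D' k = circ D k.

Definition swap_at D D' (x y : nat * bool) : Prop :=
  sgn D' =1 sgn D /\
  exists j s1 s2, circ D j = s1 ++ x :: y :: s2 /\
                  circ D' j = s1 ++ y :: x :: s2 /\
                  forall k, k != j -> circ D' k = circ D k.

Definition forbidden_move D D' : Prop :=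
  exists x y : nat * bool, x.2 = y.2 /\ swap_at D D' x y.

(* Reidemeister I (creation of an isolated arrow with adjacent endpoints,   *)
(* of either direction and either sign; removal is the inverse move)        *)
Definition R1_move D D' : Prop :=
  exists (a : nat) (b : bool) j s1 s2,
    a \notin labels D /\
    circ D j = s1 ++ s2 /\
    circ D' j = s1 ++ (a, b) :: (a, ~~ b) :: s2 /\
    (forall k, k != j -> circ D' k = circ D k) /\
    (forall x, x != a -> sgn D' x = sgn D x).

(* Reidemeister II (creation of two arrows a, c of opposite signs with      *)
(* adjacent tails and adjacent heads, heads in either order; removal is the *)
(* inverse move)                                                            *)
Definition R2_move D D' : Prop :=
  exists (a c : nat),
    [/\ a != c, a \notin labels D & c \notin labels D] /\
    sgn D' a != sgn D' c /\
    (forall x, x != a -> x != c -> sgn D' x = sgn D x) /\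
    let T := [:: (a, false); (c, false)] in
    exists H, (H = [:: (a, true); (c, true)] \/ H = [:: (c, true); (a, true)]) /\
    ((exists j k s1 s2 t1 t2,
        j != k /\ circ D j = s1 ++ s2 /\ circ D' j = s1 ++ T ++ s2 /\
        circ D k = t1 ++ t2 /\ circ D' k = t1 ++ H ++ t2 /\
        (forall l, l != j -> l != k -> circ D' l = circ D l))
     \/
     (exists j s1 s2 s3,
        circ D j = s1 ++ s2 ++ s3 /\
        (circ D' j = s1 ++ T ++ s2 ++ H ++ s3 \/
         circ D' j = s1 ++ H ++ s2 ++ T ++ s3) /\
        (forall l, l != j -> circ D' l = circ D l))).

Definition ordpair (o : bool) (x y : nat * bool) :=
  if o then (x, y) else (y, x).

(* Reidemeister III.  Arrows a : T -> M, b : T -> B, c : M -> B (top,      *)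
(* middle, bottom strands) whose endpoints form three adjacent pairs:       *)
(* tails of a and b; head of a and tail of c; heads of b and c.  The move   *)
(* reverses the order inside each of the three pairs.  oT, oM, oB record the *)
(* orders before the move (oT: tail of a before tail of b; oM: head of a    *)
(* before tail of c; oB: head of b before head of c).  The configurations   *)
(* realized by three oriented lines in the plane are exactly those with     *)
(*   oT (+) oM = sgn b (+) sgn c   and   oM (+) oB = sgn a (+) sgn b.       *)
Definition R3_move D D' : Prop :=
  exists (a b c : nat) (oT oM oB : bool) (D1 D2 : gauss n),
    (oT (+) oM = sgn D b (+) sgn D c) /\
    (oM (+) oB = sgn D a (+) sgn D b) /\
    swap_at D D1 (ordpair oT (a, false) (b, false)).1
                 (ordpair oT (a, false) (b, false)).2 /\
    swap_at D1 D2 (ordpair oM (a, true) (c, false)).1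
                  (ordpair oM (a, true) (c, false)).2 /\
    swap_at D2 D' (ordpair oB (b, true) (c, true)).1
                  (ordpair oB (b, true) (c, true)).2.

Definition reidemeister_step D D' : Prop :=
  [\/ rot_move D D', R1_move D D', R2_move D D' | R3_move D D'].

Definition move_step D D' : Prop :=
  reidemeister_step D D' \/ forbidden_move D D'.

Definition FR_equiv : relation (gauss n) := clos_refl_sym_trans _ move_step.

Definition reduced D : Prop :=
  (forall j e, e \in circ D j -> (e.1, ~~ e.2) \notin circ D j) /\
  (forall j k e1 e2,
      e1 \in circ D j -> e2 \in circ D j -> e1.2 = false -> e2.2 = false ->
      (e1.1, true) \in circ D k -> (e2.1, true) \in circ D k ->
      sgn D e1.1 = sgn D e2.1).

(* signed count of arrows from circle j (tail) to circle k (head).  On a    *)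
(* reduced diagram this is eps * m where m is the number of such arrows and *)
(* eps their common sign, i.e. the label of the arrow j -> k of the         *)
(* forbidden quiver (0 if there is none).                                   *)
Definition FM_entry D (j k : 'I_n) : int :=
  \sum_(e <- circ D j | (e.2 == false) && ((e.1, true) \in circ D k))
     (if sgn D e.1 then 1 else -1).

Definition forbidden_matrix D : 'M[int]_n := \matrix_(j, k) FM_entry D j k.

(* A Gauss diagram is the Gauss diagram of a planar (equivalently, spherical) *)
(* link diagram iff the associated combinatorial map (4-valent vertices =     *)
(* crossings, with the cyclic order of half-edges determined by the crossing  *)
(* sign, edges = arcs of the circles between consecutive endpoints) is a      *)
(* disjoint union of genus-0 maps, i.e. #faces = #vertices + 2 #components    *)
(* (Euler: V - E + F = 2 on each component, E = 2V).                           *)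

Definition maxlab D : nat := \max_(e <- endpoints D) e.1.

(* darts: (crossing, under?, outgoing?) *)
Definition dart D := ('I_(maxlab D).+1 * bool * bool)%type.

Definition nextD D (e : nat * bool) : nat * bool :=
  foldr (fun c r => if e \in c then next c e else r) e [seq circ D j | j <- enum 'I_n].
Definition prevD D (e : nat * bool) : nat * bool :=
  foldr (fun c r => if e \in c then prev c e else r) e [seq circ D j | j <- enum 'I_n].

(* edge involution: the outgoing half-edge at an endpoint is joined to the   *)
(* incoming half-edge at the next endpoint of the same circle                *)
Definition alphaD D (x : dart D) : dart D :=
  let: (a, u, o) := x in
  if o then let e := nextD D (val a, u) in (inord e.1, e.2, false)
  else let e := prevD D (val a, u) in (inord e.1, e.2, true).
Arguments alphaD : clear implicits.

(* counterclockwise rotation at a crossing.  Positive crossing:              *)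
(*   over-out -> under-out -> over-in -> under-in -> over-out;               *)
(* negative crossing:                                                         *)
(*   over-out -> under-in -> over-in -> under-out -> over-out.               *)
Definition sigmaD D (x : dart D) : dart D :=
  let: (a, u, o) := x in
  if sgn D (val a) then (a, ~~ u, u (+) o) else (a, ~~ u, u == o).
Arguments sigmaD : clear implicits.

Definition phiD D (x : dart D) : dart D := sigmaD D (alphaD D x).
Arguments phiD : clear implicits.

Definition used_dart D : pred (dart D) :=
  [pred x | (val x.1.1, false) \in endpoints D].

Definition dart_rel D : rel (dart D) :=
  [rel x y | [|| y == sigmaD D x, x == sigmaD D y, y == alphaD D x | x == alphaD D y]].

Arguments used_dart : clear implicits.
Arguments dart_rel : clear implicits.

Definition nfaces D : nat := fcard (phiD D) (used_dart D).
Definition ncomps D : nat := n_comp (dart_rel D) (used_dart D).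

Definition planar_gauss D : bool :=
  nfaces D == size (labels D) + 2 * ncomps D.

End GaussDefs.

(* Main.v *)
Require Import Defs.
From mathcomp Require Import all_boot all_order all_algebra.
From Stdlib Require Import Relations.
From mathcomp Require Import zify ring lra.
Set Implicit Arguments. Unset Strict Implicit. Unset Printing Implicit Defensive.
Import GRing.Theory Num.Theory.

Local Open Scope ring_scope.

Section PartA.
Variable n : nat.
Implicit Types D : gauss n.

Definition sgnZ D (a : nat) : int := if sgn D a then 1 else -1.

Lemma FM_entryE D j k : FM_entry D j k =
  \sum_(e <- circ D j | (e.2 == false) && ((e.1, true) \in circ D k)) sgnZ D e.1.
Proof. by []. Qed.

Lemma mem_endpoints D j e : e \in circ D j -> e \in endpoints D.
Proof. by move=> h; apply/flatten_mapP; exists j; rewrite ?mem_enum. Qed.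

Lemma mem_labels D j e : e \in circ D j -> e.1 \in labels D.
Proof. by move=> h; rewrite mem_undup; apply/map_f/(mem_endpoints h). Qed.

Lemma FM_perm D D' : (forall l, perm_eq (circ D l) (circ D' l)) ->
  sgn D' =1 sgn D -> forall j k, FM_entry D j k = FM_entry D' j k.
Proof.
move=> hp hs j k; rewrite !FM_entryE (perm_big _ (hp j)).
apply: eq_big => [e|e _]; first by rewrite (perm_mem (hp k)).
by rewrite /sgnZ hs.
Qed.

Lemma FM_add D D' (X : 'I_n -> seq (nat * bool)) :
  (forall l, perm_eq (circ D' l) (X l ++ circ D l)) ->
  (forall l e, e \in X l -> e.1 \notin labels D) ->
  (forall x, x \in labels D -> sgn D' x = sgn D x) ->
  forall j k, FM_entry D' j k = FM_entry D j k +
     \sum_(e <- X j | (e.2 == false) && ((e.1, true) \in X k)) sgnZ D' e.1.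
Proof.
move=> hp hX hs j k; rewrite !FM_entryE (perm_big _ (hp j)) big_cat /= [RHS]addrC.
congr (_ + _).
  rewrite big_seq_cond [RHS]big_seq_cond. apply: eq_bigl => e.
  case eX: (e \in X j) => //=; congr (_ && _).
  rewrite (perm_mem (hp k)) mem_cat; case: (_ \in X k) => //=.
  apply/negP => /mem_labels /=; by move: (hX _ _ eX) => /negP.
rewrite big_seq_cond [RHS]big_seq_cond; apply: eq_big => e.
  case eC: (e \in circ D j) => //=; congr (_ && _).
  rewrite (perm_mem (hp k)) mem_cat.
  case hin: (_ \in X k) => //=.
  by move: (hX _ _ hin) => /=; rewrite (mem_labels eC).
by case/andP => eC _; rewrite /sgnZ hs // (mem_labels eC).
Qed.

Lemma swap_perm D D' x y : swap_at D D' x y ->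
  (forall l, perm_eq (circ D l) (circ D' l)) /\ sgn D' =1 sgn D.
Proof.
case=> hs [j [s1 [s2 [h1 [h2 h3]]]]]; split => // l.
case: (eqVneq l j) => [->|lj]; last by rewrite h3.
by rewrite h1 h2; apply/permP => P; rewrite !count_cat /=; lia.
Qed.

Lemma FM_swap D D' x y : swap_at D D' x y -> forall j k, FM_entry D j k = FM_entry D' j k.
Proof. by case/swap_perm => ??; apply: FM_perm. Qed.

Lemma FM_step D D' : move_step D D' -> forall j k : 'I_n, j != k -> FM_entry D j k = FM_entry D' j k.
Proof.
case.
  case.
  - case=> hs [j0 [h1 h2]] j k _; apply: FM_perm => // l.
    case: (eqVneq l j0) => [->|lj]; last by rewrite h2.
    by rewrite h1 perm_sym perm_rot.
  - case=> a [b [j0 [s1 [s2 [ha [h1 [h2 [h3 h4]]]]]]]] j k jk.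
    pose X l := if l == j0 then [:: (a, b); (a, ~~ b)] else [::].
    rewrite (@FM_add D D' X).
    + rewrite /X; case: (eqVneq j j0) => [ej|nj]; last by rewrite big_nil addr0.
      rewrite -ej eq_sym (negbTE jk) /=.
      by rewrite big_cons big_cons big_nil /= !in_nil !andbF addr0.
    + move=> l; rewrite /X; case: (eqVneq l j0) => [->|lj]; last by rewrite h3.
      by rewrite h1 h2; apply/permP => P; rewrite !count_cat /=; lia.
    + move=> l e; rewrite /X; case: (l == j0); last by rewrite in_nil.
      by rewrite !inE => /orP[] /eqP -> /=.
    + by move=> x hx; apply: h4; apply: contraTneq hx => ->.
  - case=> a [c [[ac ha hc] [hsg [hs [H [hH hcase]]]]]] j k jk.
    have hsl : forall x, x \in labels D -> sgn D' x = sgn D x.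
      move=> x hx; apply: hs; [by apply: contraTneq hx => ->|by apply: contraTneq hx => ->].
    have Hlab : forall e, e \in H -> (e.1 == a) || (e.1 == c).
      by move=> e; case: hH => ->; rewrite !inE => /orP[] /eqP -> /=; rewrite eqxx ?orbT.
    have Hhead : forall e, e \in H -> e.2.
      by move=> e; case: hH => ->; rewrite !inE => /orP[] /eqP -> /=.
    have Hac : (a, true) \in H /\ (c, true) \in H.
      by case: hH => ->; rewrite !inE !eqxx ?orbT.
    have fresh : forall e : nat * bool, (e.1 == a) || (e.1 == c) -> e.1 \notin labels D.
      by move=> e /orP[] /eqP ->.
    have sum0 : sgnZ D' a + sgnZ D' c = 0.
      by move: hsg; rewrite /sgnZ; case: (sgn D' a); case: (sgn D' c).
    case: hcase.
    + case=> j0 [k0 [s1 [s2 [t1 [t2 [jk0 [e1 [e2 [e3 [e4 e5]]]]]]]]]].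
      pose X l := if l == j0 then [:: (a, false); (c, false)]
                  else if l == k0 then H else [::].
      rewrite (@FM_add D D' X).
      * rewrite /X; case: (eqVneq j j0) => [ej|nj].
          case: (eqVneq k k0) => [ek|nk].
            subst; rewrite eq_sym (negbTE jk0) big_cons big_cons big_nil /= (proj1 Hac) (proj2 Hac).
            by rewrite addr0 sum0 addr0.
          rewrite ej; rewrite ej in jk; rewrite eq_sym (negbTE jk). 
          by rewrite big_cons big_cons big_nil /= addr0.
        case: (j == k0); rewrite ?big_nil ?addr0 //.
        rewrite big_seq_cond big1 ?addr0 // => e /andP[/Hhead ->]; by [].
      * move=> l; rewrite /X; case: (eqVneq l j0) => [->|lj].
          by rewrite e2 e1; apply/permP => P; rewrite !count_cat /=; lia.
        case: (eqVneq l k0) => [->|lk]; last by rewrite e5.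
        by rewrite e4 e3; apply/permP => P; rewrite !count_cat /=; lia.
      * move=> l e; rewrite /X; case: (l == j0).
          by rewrite !inE => /orP[] /eqP -> /=.
        case: (l == k0); last by rewrite in_nil.
        by move/Hlab/fresh.
      * exact: hsl.
    + case=> j0 [s1 [s2 [s3 [e1 [e2 e3]]]]].
      pose X l := if l == j0 then [:: (a, false); (c, false)] ++ H else [::].
      rewrite (@FM_add D D' X).
      * rewrite /X; case: (eqVneq j j0) => [ej|nj]; last by rewrite big_nil addr0.
        rewrite -ej eq_sym (negbTE jk) /= big_cons big_cons /=.
        by rewrite big_seq_cond big1 ?addr0 // => e /andP[_ /andP[_]]; rewrite in_nil.
      * move=> l; rewrite /X; case: (eqVneq l j0) => [->|lj]; last by rewrite e3.
        by case: e2 => ->; rewrite e1; apply/permP => P; rewrite !count_cat /=; lia.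
      * move=> l e; rewrite /X; case: (l == j0); last by rewrite in_nil.
        rewrite mem_cat => /orP[]; last by move/Hlab/fresh.
        by rewrite !inE => /orP[] /eqP -> /=.
      * exact: hsl.
  - case=> a [b [c [oT [oM [oB [D1 [D2 [_ [_ [s1 [s2 s3]]]]]]]]]]] j k _.
    by rewrite (FM_swap s1) (FM_swap s2) (FM_swap s3).
case=> x [y [_ hsw]] j k _. exact: (FM_swap hsw).
Qed.

Lemma FM_equiv D D' : FR_equiv D D' -> forall j k : 'I_n, j != k -> FM_entry D j k = FM_entry D' j k.
Proof.
elim => {D D'} [D D' /FM_step //|D|D D' _ IH|D1 D2 D3 _ IH1 _ IH2] j k jk //.
  by rewrite IH.
by rewrite IH1 // IH2.
Qed.

End PartA.

Local Open Scope ring_scope.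

Lemma rank_inj_eval (F : fieldType) N c m (S : 'M[F]_(m, N)) (R : 'M[F]_(N, c)) :
  (forall v : 'rV[F]_N, (v <= S)%MS -> v *m R = 0 -> v = 0) -> (\rank S <= c)%N.
Proof.
move=> H; have := mxrank_mul_ker S R.
have -> : (S :&: kermx R)%MS = 0.
  apply/row_matrixP => i; rewrite row0; apply: H.
    exact: submx_trans (row_sub i _) (capmxSl _ _).
  apply/sub_kermxP; exact: submx_trans (row_sub i _) (capmxSr _ _).
rewrite mxrank0 addn0 => <-; exact: rank_leq_col.
Qed.

Lemma sum_pick (T : finType) (a : 'I_#|T| -> rat) (z : T) :
  \sum_i a i * (enum_val i == z)%:R = a (enum_rank z).
Proof.
rewrite (bigD1 (enum_rank z)) //= enum_rankK eqxx mulr1 big1 ?addr0 // => i ne.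
have -> : (enum_val i == z) = false.
  by apply/eqP => h; move/eqP: ne; apply; rewrite -h enum_valK.
by rewrite mulr0.
Qed.

Lemma sum_nth (A : Type) (x0 : A) (s : seq A) (F : A -> rat) :
  \sum_(q < size s) F (nth x0 s q) = \sum_(p <- s) F p.
Proof. by rewrite (big_nth x0) big_mkord. Qed.

Local Close Scope ring_scope.

Lemma flatten_disj (I T : eqType) (f : I -> seq T) (s : seq I) :
  uniq (flatten (map f s)) ->
  (forall i, i \in s -> uniq (f i)) /\
  (forall i j e, i \in s -> j \in s -> e \in f i -> e \in f j -> i = j).
Proof.
elim: s => [|x s IH] /=; first by split=> // i; rewrite in_nil.
rewrite cat_uniq => /and3P[ux hx us]; case: (IH us) => IH1 IH2; split.
  by move=> i; rewrite inE => /orP[/eqP ->|/IH1].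
have key : forall j e, j \in s -> e \in f x -> e \in f j -> False.
  move=> j e js ex ej; move/hasP: hx; apply; exists e => //.
  by apply/flatten_mapP; exists j.
move=> i j e; rewrite !inE => /orP[/eqP ->|iS] /orP[/eqP ->|js] ei ej //.
- by case: (key _ _ js ei ej).
- by case: (key _ _ iS ej ei).
- exact: IH2 ei ej.
Qed.

Lemma foldr_circ (T : eqType) (g : seq T -> T) (e v : T) (cs : seq (seq T)) :
  (forall c, c \in cs -> e \in c -> g c = v) -> e \in flatten cs ->
  foldr (fun c r => if e \in c then g c else r) e cs = v.
Proof.
elim: cs => [|c cs IH] //= H; rewrite mem_cat; case ec: (e \in c) => /=.
  by move=> _; apply: H; rewrite ?inE ?eqxx.
by move=> ecs; apply: IH => // c' c'cs; apply: H; rewrite inE c'cs orbT.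
Qed.

Lemma foldr_nocirc (T : eqType) (g : seq T -> T) (e : T) (cs : seq (seq T)) :
  e \notin flatten cs ->
  foldr (fun c r => if e \in c then g c else r) e cs = e.
Proof.
elim: cs => [|c cs IH] //=; rewrite mem_cat negb_or => /andP[/negbTE -> ?].
exact: IH.
Qed.

Section Comb.
Variable n : nat.
Variable D : gauss n.
Hypothesis wfD : wf_gauss D.

Local Notation EP := (endpoints D).

Lemma uniqEP : uniq EP.
Proof. by case/andP: wfD. Qed.

Lemma flipEP e : e \in EP -> (e.1, ~~ e.2) \in EP.
Proof. by case/andP: wfD => _ /allP H /H. Qed.

Lemma EP_any a u v : (a, u) \in EP -> (a, v) \in EP.
Proof.
case: (eqVneq u v) => [-> //|uv] /flipEP /=.
by have -> : ~~ u = v by case: u v uv => [] [].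
Qed.

Lemma mem_EP j e : e \in circ D j -> e \in EP.
Proof. by move=> h; apply/flatten_mapP; exists j; rewrite ?mem_enum. Qed.

Lemma EP_circ e : e \in EP -> exists j, e \in circ D j.
Proof. by case/flatten_mapP => j _ h; exists j. Qed.

Lemma circ_disj i j e : e \in circ D i -> e \in circ D j -> i = j.
Proof.
have [_ H] := flatten_disj uniqEP.
by move=> ei ej; apply: H ei ej; rewrite mem_enum.
Qed.

Lemma uniq_circ j : uniq (circ D j).
Proof. by have [H _] := flatten_disj uniqEP; apply: H; rewrite mem_enum. Qed.

Lemma nextD_in j e : e \in circ D j -> nextD D e = next (circ D j) e.
Proof.
move=> ej; rewrite /nextD; apply: (foldr_circ (g := fun c => next c e)).
  by move=> c /mapP[i _ ->] ei; rewrite (circ_disj ei ej).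
exact: (mem_EP ej).
Qed.

Lemma prevD_in j e : e \in circ D j -> prevD D e = prev (circ D j) e.
Proof.
move=> ej; rewrite /prevD; apply: (foldr_circ (g := fun c => prev c e)).
  by move=> c /mapP[i _ ->] ei; rewrite (circ_disj ei ej).
exact: (mem_EP ej).
Qed.

Lemma nextD_out e : e \notin EP -> nextD D e = e.
Proof. by move=> h; rewrite /nextD foldr_nocirc. Qed.

Lemma prevD_out e : e \notin EP -> prevD D e = e.
Proof. by move=> h; rewrite /prevD foldr_nocirc. Qed.

Lemma nextD_circ j e : (nextD D e \in circ D j) = (e \in circ D j).
Proof.
case: (boolP (e \in EP)) => [/EP_circ [i ei]|eE]; last by rewrite nextD_out.
rewrite (nextD_in ei); case: (eqVneq i j) => [<-|ij]; first by rewrite mem_next.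
have -> : (e \in circ D j) = false by apply/negP => h; move/eqP: ij; apply; exact: circ_disj ei h.
apply/negP => h; move/eqP: ij; apply; apply: (circ_disj _ h); by rewrite mem_next.
Qed.

Lemma prevD_circ j e : (prevD D e \in circ D j) = (e \in circ D j).
Proof.
case: (boolP (e \in EP)) => [/EP_circ [i ei]|eE]; last by rewrite prevD_out // (negbTE eE).
rewrite (prevD_in ei); case: (eqVneq i j) => [<-|ij]; first by rewrite mem_prev.
have -> : (e \in circ D j) = false by apply/negP => h; move/eqP: ij; apply; exact: circ_disj ei h.
apply/negP => h; move/eqP: ij; apply; apply: (circ_disj _ h); by rewrite mem_prev.
Qed.

Lemma nextD_EP e : (nextD D e \in EP) = (e \in EP).
Proof.
case: (boolP (e \in EP)) => [/EP_circ [i ei]|eE]; last by rewrite nextD_out // (negbTE eE).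
by apply: (mem_EP (j := i)); rewrite nextD_circ.
Qed.

Lemma prevD_EP e : (prevD D e \in EP) = (e \in EP).
Proof.
case: (boolP (e \in EP)) => [/EP_circ [i ei]|eE]; last by rewrite prevD_out // (negbTE eE).
by rewrite (mem_EP (j := i)) // prevD_circ.
Qed.

Lemma nextDK : cancel (nextD D) (prevD D).
Proof.
move=> e; case: (boolP (e \in EP)) => [/EP_circ [i ei]|eE]; last by rewrite !(nextD_out, prevD_out) ?nextD_out.
have ei' : nextD D e \in circ D i by rewrite nextD_circ.
by rewrite (prevD_in ei') (nextD_in ei) prev_next // uniq_circ.
Qed.

Lemma prevDK : cancel (prevD D) (nextD D).
Proof.
move=> e; case: (boolP (e \in EP)) => [/EP_circ [i ei]|eE]; last by rewrite !(nextD_out, prevD_out) ?prevD_out.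
have ei' : prevD D e \in circ D i by rewrite prevD_circ.
by rewrite (nextD_in ei') (prevD_in ei) next_prev // uniq_circ.
Qed.

Lemma EP_lab e : e \in EP -> e.1 < (maxlab D).+1.
Proof.
move=> h; rewrite ltnS /maxlab.
by apply: (@leq_bigmax_seq _ _ xpredT (fun e : nat * bool => e.1) _ h).
Qed.


Local Notation T := (dart D).
Definition out (p : nat * bool) : T := (inord p.1, p.2, true).
Definition inn (p : nat * bool) : T := (inord p.1, p.2, false).
Definition used (x : T) := (val x.1.1, false) \in EP.

Lemma usedE x : used x = ((val x.1.1, x.1.2) \in EP).
Proof. by apply/idP/idP; apply: EP_any. Qed.

Lemma used_dartE x : (x \in @used_dart n D) = used x.
Proof. by []. Qed.

Lemma lab_inord e : e \in EP -> val (inord e.1 : 'I_(maxlab D).+1) = e.1.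
Proof. by move=> h; apply: inordK; exact: EP_lab. Qed.

Lemma alpha_out p : p \in EP -> @alphaD n D (out p) = inn (nextD D p).
Proof. by case: p => a u h; rewrite /alphaD /out /= inordK ?(EP_lab h). Qed.

Lemma alpha_inn p : p \in EP -> @alphaD n D (inn p) = out (prevD D p).
Proof. by case: p => a u h; rewrite /alphaD /inn /= inordK ?(EP_lab h). Qed.

Lemma dart_eta (x : T) : x = (if x.2 then out (val x.1.1, x.1.2) else inn (val x.1.1, x.1.2)).
Proof. by case: x => [[a u] []]; rewrite /out /inn /= inord_val. Qed.

Lemma alpha_unused (x : T) : ~~ used x -> @alphaD n D x = (x.1.1, x.1.2, ~~ x.2).
Proof.
case: x => [[a u] o]; rewrite usedE /= => h.
by case: o; rewrite /alphaD /= ?nextD_out ?prevD_out //= inord_val.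
Qed.

Lemma used_out p : p \in EP -> used (out p).
Proof. by move=> h; rewrite usedE /= lab_inord //; case: p h. Qed.

Lemma used_inn p : p \in EP -> used (inn p).
Proof. by move=> h; rewrite usedE /= lab_inord //; case: p h. Qed.

Lemma alphaK : involutive (@alphaD n D).
Proof.
move=> x; case: (boolP (used x)) => ux; last first.
  rewrite (alpha_unused ux) alpha_unused //.
  by case: x {ux} => [[a u] o]; rewrite negbK.
have xE : (val x.1.1, x.1.2) \in EP by move: ux; rewrite usedE.
rewrite (dart_eta x); case: x.2.
  by rewrite alpha_out // alpha_inn ?nextD_EP // nextDK.
by rewrite alpha_inn // alpha_out ?prevD_EP // prevDK.
Qed.

Lemma used_alpha x : used (@alphaD n D x) = used x.
Proof.
case: (boolP (used x)) => ux; last first.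
  by rewrite alpha_unused //; apply: negbTE.
have xE : (val x.1.1, x.1.2) \in EP by move: ux; rewrite usedE.
rewrite (dart_eta x); case: x.2.
  by rewrite alpha_out // used_inn // nextD_EP.
by rewrite alpha_inn // used_out // prevD_EP.
Qed.

Lemma sigma_lab x : (@sigmaD n D x).1.1 = x.1.1.
Proof. by case: x => [[a u] o]; rewrite /sigmaD; case: sgn. Qed.

Lemma used_sigma x : used (@sigmaD n D x) = used x.
Proof. by rewrite /used sigma_lab. Qed.

Lemma used_phi x : used (@phiD n D x) = used x.
Proof. by rewrite /phiD used_sigma used_alpha. Qed.

Lemma sigma_inj : injective (@sigmaD n D).
Proof.
move=> x y H; have := sigma_lab x; rewrite H sigma_lab.
case: x H => [[a u] o]; case: y => [[b v] w] /= H ab; subst b.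
by move: H; rewrite /sigmaD /=; case: (sgn D (val a)); case: u; case: v; case: o; case: w.
Qed.

Lemma phi_inj : injective (@phiD n D).
Proof. exact: inj_comp sigma_inj (can_inj alphaK). Qed.

Lemma froot_phi x : froot (@phiD n D) (@phiD n D x) = froot (@phiD n D) x.
Proof.
apply/(fingraph.rootP (fconnect_sym phi_inj)); rewrite (fconnect_sym phi_inj); exact: fconnect1.
Qed.

Lemma used_froot x : used (froot (@phiD n D) x) = used x.
Proof.
have cl : closed (frel (@phiD n D)) (@used_dart n D).
  by move=> y z /eqP <-; rewrite !used_dartE used_phi.
by rewrite -!used_dartE -(closed_connect cl (connect_root _ x)).
Qed.

Lemma dart_rel_sym : ssrbool.symmetric (@dart_rel n D).
Proof. by move=> x y; rewrite /dart_rel /=; case: (y == _); case: (x == _); case: (y == _); case: (x == _). Qed.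

Lemma used_root x : used (fingraph.root (@dart_rel n D) x) = used x.
Proof.
have cl : closed (@dart_rel n D) (@used_dart n D).
  move=> y z; rewrite !used_dartE /dart_rel /= => /or4P[] /eqP ->;
  by rewrite ?used_sigma ?used_alpha.
by rewrite -!used_dartE -(closed_connect cl (connect_root _ x)).
Qed.


Local Open Scope ring_scope.
Local Notation phi := (@phiD n D).
Local Notation alpha := (@alphaD n D).
Local Notation sigma := (@sigmaD n D).
Local Notation drel := (@dart_rel n D).
Local Notation NT := #|{: T}|.

Definition vd (v : 'rV[rat]_NT) (x : T) : rat := v 0 (enum_rank x).

Definition FR : {set T} := [set x | used x && (froot phi x == x)].
Definition CR : {set T} := [set x | used x && (fingraph.root drel x == x)].

Lemma card_FR : #|FR| = nfaces D.
Proof. by rewrite /nfaces cardsE; apply: eq_card => x; rewrite !inE andbC. Qed.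

Lemma card_CR : #|CR| = ncomps D.
Proof. by rewrite /ncomps cardsE; apply: eq_card => x; rewrite !inE andbC. Qed.

Definition Pm : 'M[rat]_(#|FR|, NT) :=
  \matrix_(f, i) (used (enum_val i) && (froot phi (enum_val i) == enum_val f))%:R.

Definition RF : 'M[rat]_(NT, #|FR|) := \matrix_(i, g) (enum_val i == enum_val g)%:R.

Lemma FR_prop (f : 'I_#|FR|) : used (enum_val f) /\ froot phi (enum_val f) = enum_val f.
Proof. by have := enum_valP f; rewrite inE => /andP[-> /eqP]. Qed.

Lemma rank_Pm : \rank Pm = #|FR|.
Proof.
apply/eqP; apply/row_freeP; exists RF; apply/matrixP => f g.
rewrite !mxE; under eq_bigr do rewrite !mxE.
rewrite (sum_pick (fun i => (used (enum_val i) && (froot phi (enum_val i) == enum_val f))%:R)).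
rewrite enum_rankK; case: (FR_prop g) => -> ->; rewrite /=.
by rewrite (inj_eq enum_val_inj) eq_sym.
Qed.

Lemma sub_Pm (v : 'rV[rat]_NT) : (v <= Pm)%MS ->
  (forall x, vd v (phi x) = vd v x) /\ (forall x, ~~ used x -> vd v x = 0).
Proof.
case/submxP => Y ->; split => [x|x ux]; rewrite /vd !mxE.
  by apply: eq_bigr => f _; rewrite !mxE !enum_rankK used_phi froot_phi.
by apply: big1 => f _; rewrite !mxE enum_rankK (negbTE ux) mulr0.
Qed.

Local Notation E := (size EP).
Local Notation L := (labels D).
Local Notation V := (size (labels D)).
Definition ep (q : 'I_E) : nat * bool := nth (0%N, false) EP q.
Definition lb (vv : 'I_V) : nat := nth 0%N L vv.

Definition Dl : 'M[rat]_(NT, E) :=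
  \matrix_(i, q) ((enum_val i == out (ep q))%:R - (enum_val i == inn (nextD D (ep q)))%:R).

Lemma mulDl v q : (v *m Dl) 0 q = vd v (out (ep q)) - vd v (inn (nextD D (ep q))).
Proof.
rewrite mxE; under eq_bigr do rewrite mxE mulrBr.
by rewrite sumrB !sum_pick.
Qed.

Lemma ep_index p (pE : p \in EP) : ep (Ordinal (eq_ind_r is_true pE (index_mem p EP))) = p.
Proof. by rewrite /ep /= nth_index. Qed.

Lemma kerDl v : v *m Dl = 0 -> forall p, p \in EP ->
  vd v (out p) = vd v (inn (nextD D p)).
Proof.
move=> h p pE; have := congr1 (fun M : 'M[rat]_(1, E) => M 0 (Ordinal (eq_ind_r is_true pE (index_mem p EP)))) h.
by rewrite mulDl ep_index // mxE => /eqP; rewrite subr_eq0 => /eqP.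
Qed.

Lemma sigma_phi_alpha x : sigma x = phi (alpha x).
Proof. by rewrite /phiD alphaK. Qed.

Lemma ker_alpha v : (v <= Pm)%MS -> v *m Dl = 0 -> forall x, vd v (alpha x) = vd v x.
Proof.
move=> /sub_Pm [hphi h0] hD x; case: (boolP (used x)) => ux; last first.
  by rewrite !h0 // used_alpha.
have xE : (val x.1.1, x.1.2) \in EP by move: ux; rewrite usedE.
rewrite (dart_eta x); case: x.2.
  by rewrite alpha_out // (kerDl hD).
rewrite alpha_inn // (kerDl hD) ?prevD_EP //.
by rewrite prevDK.
Qed.

Lemma ker_sigma v : (v <= Pm)%MS -> v *m Dl = 0 -> forall x, vd v (sigma x) = vd v x.
Proof.
move=> hP hD x; rewrite sigma_phi_alpha; have [hphi _] := sub_Pm hP.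
by rewrite hphi ker_alpha.
Qed.

Lemma drel_sym : connect_sym drel.
Proof. exact: sym_connect_sym dart_rel_sym. Qed.

Lemma const_connect (K : T -> rat) :
  (forall x, K (alpha x) = K x) -> (forall x, K (sigma x) = K x) ->
  forall x, K (fingraph.root drel x) = K x.
Proof.
move=> Ka Ks x.
have cl : closed drel [pred y | K y == K x].
  move=> y z; rewrite !inE => /or4P[] /eqP ->;
  by rewrite ?Ka ?Ks.
have := closed_connect cl (connect_root _ x); rewrite !inE eqxx => /esym/eqP.
by [].
Qed.

Definition RC : 'M[rat]_(NT, #|CR|) := \matrix_(i, c) (enum_val i == enum_val c)%:R.

Lemma root_CR x : used x -> fingraph.root drel x \in CR.
Proof. by move=> ux; rewrite inE used_root ux /= (root_root drel_sym). Qed.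

Lemma rank_cap : (\rank (Pm :&: kermx Dl) <= #|CR|)%N.
Proof.
apply: (rank_inj_eval (R := RC)) => v hv hR.
have hP : (v <= Pm)%MS by move: hv; rewrite sub_capmx => /andP[].
have hD : v *m Dl = 0 by apply/sub_kermxP; move: hv; rewrite sub_capmx => /andP[].
have [_ h0] := sub_Pm hP.
apply/rowP => i; rewrite [RHS]mxE; set x := enum_val i.
have -> : v 0 i = vd v x by rewrite /vd enum_valK.
case: (boolP (used x)) => ux; last exact: h0.
have rC := root_CR ux.
have := congr1 (fun M : 'M[rat]_(1, #|CR|) => M 0 (enum_rank_in rC (fingraph.root drel x))) hR.
rewrite mxE; under eq_bigr do rewrite mxE.
rewrite sum_pick (enum_rankK_in rC) // mxE.
rewrite -/(vd v _) (const_connect (ker_alpha hP hD) (ker_sigma hP hD)).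
by [].
Qed.

Lemma L_EP a u : a \in L -> (a, u) \in EP.
Proof.
rewrite mem_undup => /mapP [[b v] bE /= ->]; exact: EP_any bE.
Qed.

Lemma EP_L e : e \in EP -> e.1 \in L.
Proof. by move=> h; rewrite mem_undup; apply: map_f. Qed.

Lemma lb_L vv : lb vv \in L.
Proof. exact: mem_nth. Qed.

Lemma perm_nextD s : uniq s -> (forall e, (prevD D e \in s) = (e \in s)) ->
  perm_eq (map (nextD D) s) s.
Proof.
move=> us hs; apply: uniq_perm => //; first by rewrite (map_inj_uniq (can_inj nextDK)).
move=> e; rewrite -{1}(prevDK e) (mem_map (can_inj nextDK)); exact: hs.
Qed.

Lemma sum_loc (h : nat * bool -> rat) a : a \in L ->
  \sum_(p <- EP) h p * (p.1 == a)%:R = h (a, false) + h (a, true).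
Proof.
move=> aL.
have -> : \sum_(p <- EP) h p * (p.1 == a)%:R = \sum_(p <- EP | p.1 == a) h p.
  by rewrite [RHS]big_mkcond; apply: eq_bigr => p _; case: (p.1 == a); rewrite ?mulr1 ?mulr0.
rewrite -big_filter (perm_big [:: (a, false); (a, true)]).
  by rewrite big_cons big_seq1.
apply: uniq_perm; first by rewrite filter_uniq // uniqEP.
  by rewrite /= inE andbT; apply/eqP; case.
move=> [b u]; rewrite mem_filter !inE !xpair_eqE /=.
case: (eqVneq b a) => [->|ba] /=; first by rewrite L_EP //; case: u.
by [].
Qed.

Lemma div_formula (g : nat * bool -> rat) a : a \in L ->
  \sum_(q < E) g (ep q) * (((ep q).1 == a)%:R - ((nextD D (ep q)).1 == a)%:R) =
  g (a, false) + g (a, true) - (g (prevD D (a, false)) + g (prevD D (a, true))).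
Proof.
move=> aL.
rewrite (sum_nth (0%N, false) EP (fun p => g p * ((p.1 == a)%:R - ((nextD D p).1 == a)%:R))).
under eq_bigr do rewrite mulrBr.
rewrite sumrB sum_loc //; congr (_ - _).
rewrite -(sum_loc (fun e => g (prevD D e)) aL).
rewrite [RHS](perm_big _ ((eq_ind _ is_true (perm_nextD uniqEP prevD_EP) _ (perm_sym _ _)))) big_map.
by apply: eq_bigr => p _; rewrite nextDK.
Qed.

Definition Div : 'M[rat]_(E, V) :=
  \matrix_(q, vv) (((ep q).1 == lb vv)%:R - ((nextD D (ep q)).1 == lb vv)%:R).

Lemma sigma_alpha_Pm v : (v <= Pm)%MS -> forall z, vd v (sigma z) = vd v (alpha z).
Proof. by move=> /sub_Pm [hphi _] z; rewrite sigma_phi_alpha hphi. Qed.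

Lemma PmDl_Div : (Pm *m Dl <= kermx Div)%MS.
Proof.
apply/sub_kermxP; apply/row_matrixP => f; rewrite row0 !row_mul.
have hv : (row f Pm <= Pm)%MS by exact: row_sub.
move: (row f Pm) hv => v hv.
have sa := sigma_alpha_Pm hv.
apply/rowP => vv; rewrite !mxE; under eq_bigr do rewrite mulDl mxE.
rewrite (div_formula (fun p => vd v (out p) - vd v (inn (nextD D p))) (lb_L vv)).
set a := lb vv; have aL : a \in L := lb_L vv.
rewrite !prevDK -!alpha_out ?L_EP // -!alpha_inn ?L_EP // -!sa.
have la : val (inord a : 'I_(maxlab D).+1) = a by apply: (lab_inord (e := (a, false))); rewrite L_EP.
rewrite /sigmaD /out /inn /= la; case: (sgn D a) => /=; ring.
Qed.

Definition wk (k : 'I_n) : 'rV[rat]_E := \row_q ((ep q \in circ D k)%:R).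

Lemma wk_Div k : wk k *m Div = 0.
Proof.
apply/rowP => vv; rewrite !mxE; under eq_bigr do rewrite !mxE.
rewrite (div_formula (fun p => (p \in circ D k)%:R) (lb_L vv)).
by rewrite !prevD_circ subrr.
Qed.

Definition RV : 'M[rat]_(V, #|CR|) := \matrix_(vv, c) (lb vv == val (enum_val c).1.1)%:R.

Lemma lb_inj : injective lb.
Proof.
move=> x y /eqP; rewrite /lb nth_uniq ?undup_uniq // => /eqP h; exact: val_inj.
Qed.

Lemma rank_kerDivT : (\rank (kermx Div^T) <= #|CR|)%N.
Proof.
apply: (rank_inj_eval (R := RV)) => g hg hR.
have hD : g *m Div^T = 0 by apply/sub_kermxP.
pose G (a : nat) := \sum_vv g 0 vv * (lb vv == a)%:R.
have hG : forall p, p \in EP -> G p.1 = G (nextD D p).1.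
  move=> p pE.
  have := congr1 (fun M : 'M[rat]_(1, E) => M 0 (Ordinal (eq_ind_r is_true pE (index_mem p EP)))) hD.
  rewrite !mxE; under eq_bigr do rewrite !mxE ep_index // mulrBr.
  rewrite sumrB => /eqP; rewrite subr_eq0 => /eqP.
  rewrite /G; under eq_bigr do rewrite eq_sym; move=> ->.
  by apply: eq_bigr => vv _; rewrite eq_sym.
have hR0 : forall c : 'I_#|CR|, G (val (enum_val c).1.1) = 0.
  move=> c; have := congr1 (fun M : 'M[rat]_(1, #|CR|) => M 0 c) hR.
  by rewrite !mxE; under eq_bigr do rewrite !mxE.
pose K (x : T) := G (val x.1.1).
have Ks : forall x, K (sigma x) = K x by move=> x; rewrite /K sigma_lab.
have Ka : forall x, K (alpha x) = K x.
  move=> x; case: (boolP (used x)) => ux; last by rewrite /K alpha_unused.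
  have xE : (val x.1.1, x.1.2) \in EP by move: ux; rewrite usedE.
  rewrite (dart_eta x); case: x.2.
    rewrite alpha_out // /K /out /inn /= lab_inord ?nextD_EP // inord_val.
    by rewrite (hG _ xE).
  rewrite alpha_inn // /K /out /inn /= lab_inord ?prevD_EP // inord_val.
  by rewrite hG ?prevD_EP // prevDK.
apply/rowP => vv; rewrite [RHS]mxE.
set a := lb vv; have aL : a \in L := lb_L vv.
have ux : used (out (a, false)) by apply: used_out; rewrite L_EP.
have rC := root_CR ux.
have := hR0 (enum_rank_in rC (fingraph.root drel (out (a, false)))).
rewrite (enum_rankK_in rC) // -/(K _) (const_connect Ka Ks).
rewrite /K /out /= (lab_inord (e := (a, false))) ?L_EP //= /G.
rewrite (bigD1 vv) //= eqxx mulr1 big1 ?addr0 // => vv' ne.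
by rewrite (_ : (lb vv' == a) = false) ?mulr0 //; apply/eqP => /lb_inj h; rewrite h eqxx in ne.
Qed.

Lemma size_EP : E = (2 * V)%N.
Proof.
have -> : E = size [seq (a, b) | a <- L, b <- [:: false; true]].
  apply: perm_size; apply: uniq_perm; first exact: uniqEP.
    apply: allpairs_uniq => //; first exact: undup_uniq.
    by move=> [a b] [a' b'] _ _ /=.
  move=> [a b]; apply/idP/allpairsP => [pE|[[a' b'] /= [aL _ [-> ->]]]].
    by exists (a, b); rewrite /= (EP_L pE); split => //; case: b {pE}.
  exact: L_EP.
by rewrite size_allpairs mulnC.
Qed.

Lemma exists_H k : planar_gauss D ->
  exists H : 'rV[rat]_NT, (H <= Pm)%MS /\ H *m Dl = wk k.
Proof.
move=> /eqP pl.
have sub := PmDl_Div.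
have r1 : (\rank (Pm *m Dl) + \rank (Pm :&: kermx Dl))%N = nfaces D.
  by rewrite mxrank_mul_ker rank_Pm card_FR.
have r0 := rank_cap.
have r2 := mxrank_ker Div.
have r3 := mxrank_ker Div^T.
have r4 := rank_kerDivT.
have r5 := size_EP.
rewrite mxrank_tr in r3.
rewrite card_CR in r0 r4.
have le : (\rank (kermx Div) <= \rank (Pm *m Dl))%N.
  rewrite r2; lia.
have sub2 : (kermx Div <= Pm *m Dl)%MS.
  by rewrite -(mxrank_leqif_sup sub).2 eqn_leq le mxrankS.
have /submxP [Y hY] : (wk k <= Pm *m Dl)%MS.
  by apply: submx_trans sub2; apply/sub_kermxP; exact: wk_Div.
by exists (Y *m Pm); split; [exact: submxMl | rewrite -mulmxA].
Qed.

Definition flip (e : nat * bool) := (e.1, ~~ e.2).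
Lemma flipK : involutive flip.
Proof. by case=> a b; rewrite /flip /= negbK. Qed.

Lemma FM_flip j k (F : nat -> rat) :
  \sum_(e <- circ D k | (e.2 == false) && ((e.1, true) \in circ D j)) F e.1 =
  \sum_(e <- circ D j | e.2 && ((e.1, false) \in circ D k)) F e.1.
Proof.
rewrite -[LHS]big_filter -[RHS]big_filter.
rewrite (perm_big (map flip [seq e <- circ D j | e.2 && ((e.1, false) \in circ D k)])).
  by rewrite big_map.
apply: uniq_perm; first by rewrite filter_uniq // uniq_circ.
  by rewrite (map_inj_uniq (can_inj flipK)) filter_uniq // uniq_circ.
move=> x; rewrite -{2}(flipK x) (mem_map (can_inj flipK)) !mem_filter.
by case: x => b [] /=; rewrite ?andbF //= andbC.
Qed.

Definition sr (a : nat) : rat := if sgn D a then 1 else -1.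

Lemma FM_rat j k : (FM_entry D j k)%:~R =
  \sum_(e <- circ D j | (e.2 == false) && ((e.1, true) \in circ D k)) sr e.1.
Proof.
rewrite /FM_entry rmorph_sum; apply: eq_bigr => e _.
by rewrite /sr; case: (sgn D e.1); rewrite ?rmorphN rmorph1.
Qed.

Lemma sum_split_cond (s : seq (nat * bool)) (P Q : pred (nat * bool))
  (f : nat * bool -> rat) (c : nat * bool -> rat) :
  (forall e, c e = (if P e then f e else 0) - (if Q e then f e else 0)) ->
  \sum_(e <- s | P e) f e - \sum_(e <- s | Q e) f e = \sum_(e <- s) c e.
Proof.
move=> h; rewrite (big_mkcond P) (big_mkcond Q) -sumrB.
by apply: eq_bigr => e _; rewrite h.
Qed.

Lemma FM_sym j k : planar_gauss D -> FM_entry D j k = FM_entry D k j.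
Proof.
move=> pl; have [H [hP hD]] := exists_H k pl.
have [hphi _] := sub_Pm hP.
have sa := sigma_alpha_Pm hP.
have hw : forall p, p \in EP -> vd H (out p) - vd H (inn (nextD D p)) = (p \in circ D k)%:R.
  move=> p pE.
  have := congr1 (fun M : 'M[rat]_(1, E) => M 0 (Ordinal (eq_ind_r is_true pE (index_mem p EP)))) hD.
  by rewrite mulDl ep_index // mxE ep_index.
pose c (e : nat * bool) : rat := if e.2 then - (sr e.1 * ((e.1, false) \in circ D k)%:R)
                                 else sr e.1 * ((e.1, true) \in circ D k)%:R.
have hc : forall e, e \in EP -> vd H (out e) - vd H (sigma (inn e)) = c e.
  move=> [a u] eE.
  have e'E : (a, ~~ u) \in EP by apply: EP_any eE.
  have X1 := hw _ e'E.
  rewrite -alpha_out // -sa in X1.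
  have X2 := hw _ (eq_ind_r is_true e'E (prevD_EP (a, ~~ u))).
  rewrite prevDK prevD_circ -alpha_inn // -sa in X2.
  have la : val (inord a : 'I_(maxlab D).+1) = a by apply: (lab_inord (e := (a, u))).
  move: X1 X2; rewrite /c /sr /sigmaD /out /inn /= la.
  by clear eE e'E; case: u; case: (sgn D a) => /=; move=> X1 X2; lra.
have tele : \sum_(p <- circ D j) c (nextD D p) = 0.
  have -> : \sum_(p <- circ D j) c (nextD D p) =
            \sum_(p <- circ D j) (vd H (out (nextD D p)) - vd H (out p)).
    rewrite big_seq [RHS]big_seq; apply: eq_bigr => p pj.
    have pE : p \in EP := mem_EP pj.
    rewrite -hc ?nextD_EP //; congr (_ - _).
    by rewrite -(hphi (out p)) /phiD alpha_out.
  rewrite sumrB -(big_map (nextD D) xpredT (fun e => vd H (out e))).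
  by rewrite (perm_big _ (perm_nextD (uniq_circ j) (prevD_circ j))) subrr.
rewrite -(big_map (nextD D) xpredT c) (perm_big _ (perm_nextD (uniq_circ j) (prevD_circ j))) in tele.
apply: (@intr_inj rat); apply/eqP; rewrite -subr_eq0; apply/eqP.
rewrite !FM_rat (FM_flip j k); apply: (etrans _ tele).
apply: sum_split_cond => e.
rewrite /c; case: e.2; case: (_ \in circ D k) => /=; rewrite ?mulr1 ?mulr0 ?subr0 ?sub0r ?oppr0 //.
Qed.

End Comb.

Local Open Scope ring_scope.

Theorem mainTheorem3 (n : nat) (D D' : gauss n) :
  wf_gauss D -> planar_gauss D ->
  FR_equiv D D' -> reduced D' ->
  (forbidden_matrix D')^T = forbidden_matrix D'.
Proof.
move=> wf pl heq _; apply/matrixP => j k; rewrite !mxE.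
case: (eqVneq k j) => [-> //|kj].
rewrite -(FM_equiv heq kj) -(FM_equiv heq (j := j) (k := k)) ?(eq_sym j) //.
exact: FM_sym wf k j pl.
Qed.
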